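(* Let $H=\langle a,b \mid c=[b,a],\ [c,a]=[c,b]=1\rangle$. Then $PJ(H)=J_0(H)$.
   Context: $[x,y]=x^{-1}y^{-1}xy$; $H\cong UT(3,\mathbb{Z})$ and each element is uniquely $a^mb^nc^k$, $m,n,k\in\mathbb{Z}$. $PJ(H)$ is the space of functions $f\colon H\to\mathbb{R}$ such that for some $\delta>0$, $|f(xy)+f(xy^{-1})-2f(x)|\le\delta$ for all $x,y\in H$, and $f(x^n)=nf(x)$ for all $x\in H$, $n\in\mathbb{Z}$. $J_0(H)$ is the space of $f\colon H\to\mathbb{R}$ with $f(xy)+f(xy^{-1})=2f(x)$ for all $x,y$ and $f(1)=0$. *)

(* Defs.v *)
From Stdlib Require Import Reals ZArith Lia Lra.
Open Scope R_scope.

(* The discrete Heisenberg group H = < a, b | c = [b,a], [c,a] = [c,b] = 1 >,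
   with [x,y] = x^-1 y^-1 x y, realised via the unique normal form a^m b^n c^k,
   encoded as the triple (m, n, k).  From c = [b,a] we get b a = a b c, and c is
   central, hence  b^n a^p = a^p b^n c^(n p)  and
     (a^m b^n c^k)(a^p b^q c^l) = a^(m+p) b^(n+q) c^(k+l+n p). *)
Definition H : Type := (Z * Z * Z)%type.

Definition hmul (x y : H) : H :=
  match x, y with
  | (m, n, k), (p, q, l) => ((m + p)%Z, (n + q)%Z, (k + l + n * p)%Z)
  end.

Definition hone : H := (0%Z, 0%Z, 0%Z).

Definition hinv (x : H) : H :=
  match x with
  | (m, n, k) => ((- m)%Z, (- n)%Z, (m * n - k)%Z)
  end.

Definition ga : H := (1%Z, 0%Z, 0%Z).
Definition gb : H := (0%Z, 1%Z, 0%Z).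
Definition gc : H := (0%Z, 0%Z, 1%Z).

Definition hcomm (x y : H) : H := hmul (hmul (hinv x) (hinv y)) (hmul x y).

Fixpoint hpow_nat (x : H) (n : nat) : H :=
  match n with
  | O => hone
  | S n' => hmul x (hpow_nat x n')
  end.

Definition hpow (x : H) (n : Z) : H :=
  match n with
  | Z0 => hone
  | Zpos p => hpow_nat x (Pos.to_nat p)
  | Zneg p => hinv (hpow_nat x (Pos.to_nat p))
  end.

Lemma H_rel_c : gc = hcomm gb ga. Proof. reflexivity. Qed.
Lemma H_rel_ca : hcomm gc ga = hone. Proof. reflexivity. Qed.
Lemma H_rel_cb : hcomm gc gb = hone. Proof. reflexivity. Qed.
Lemma H_assoc : forall x y z, hmul (hmul x y) z = hmul x (hmul y z).
Proof. intros [[m n] k] [[p q] l] [[r s] t]; simpl; apply f_equal2; [apply f_equal2|]; lia. Qed.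
Lemma H_inv_l : forall x, hmul (hinv x) x = hone.
Proof. intros [[m n] k]; unfold hmul, hinv, hone; apply f_equal2; [apply f_equal2|]; lia. Qed.
Lemma H_one_l : forall x, hmul hone x = x.
Proof. intros [[m n] k]; unfold hmul, hone; apply f_equal2; [apply f_equal2|]; lia. Qed.

Definition PJ (f : H -> R) : Prop :=
  (exists delta : R, delta > 0 /\
     forall x y : H,
       Rabs (f (hmul x y) + f (hmul x (hinv y)) - 2 * f x) <= delta) /\
  (forall (x : H) (n : Z), f (hpow x n) = IZR n * f x).

Definition J0 (f : H -> R) : Prop :=
  (forall x y : H, f (hmul x y) + f (hmul x (hinv y)) = 2 * f x) /\
  f hone = 0.

(* Main.v *)
Require Import Defs.
From Stdlib Require Import Reals ZArith Lia Lra.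
Open Scope R_scope.

Lemma rabs_iff a x : Rabs x <= a <-> -a <= x <= a.
Proof. unfold Rabs; destruct (Rcase_abs x); split; intros; lra. Qed.

Ltac triple := apply f_equal2; [apply f_equal2|].

Lemma pow_nat_form m n k N : exists t,
  hpow_nat (m,n,k) N = (Z.of_nat N * m, Z.of_nat N * n, Z.of_nat N * k + m*n*t)%Z
  /\ (2*t = Z.of_nat N * (Z.of_nat N - 1))%Z.
Proof.
  induction N as [|N IH].
  - exists 0%Z. simpl. unfold hone. split; [triple; ring | ring].
  - destruct IH as [t [E Ht]]. exists (t + Z.of_nat N)%Z. simpl hpow_nat. rewrite E.
    unfold hmul. rewrite Nat2Z.inj_succ. split; [triple; unfold Z.succ; ring | nia].
Qed.

Lemma pow_form m n k N : exists t,
  hpow (m,n,k) N = (N * m, N * n, N * k + m*n*t)%Z /\ (2*t = N * (N - 1))%Z.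
Proof.
  destruct N as [|p|p].
  - exists 0%Z. simpl. unfold hone. split; [triple; ring | ring].
  - destruct (pow_nat_form m n k (Pos.to_nat p)) as [t [E Ht]].
    rewrite positive_nat_Z in E, Ht. exists t. simpl. rewrite E. auto.
  - destruct (pow_nat_form m n k (Pos.to_nat p)) as [t [E Ht]].
    rewrite positive_nat_Z in E, Ht. exists (Z.pos p * Z.pos p - t)%Z. simpl hpow. rewrite E.
    unfold hinv. change (Z.neg p) with (- Z.pos p)%Z. split; [triple; ring | nia].
Qed.

Lemma mul_one_r x : hmul x hone = x.
Proof. destruct x as [[m n] k]; unfold hmul, hone; triple; ring. Qed.
Lemma inv_r x : hmul x (hinv x) = hone.
Proof. destruct x as [[m n] k]; unfold hmul, hinv, hone; triple; ring. Qed.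

Lemma pow_comm x N : hmul (hpow_nat x N) x = hpow_nat x (S N).
Proof.
  induction N as [|N IH]; cbn [hpow_nat].
  - rewrite H_one_l, mul_one_r. reflexivity.
  - rewrite H_assoc. cbn [hpow_nat] in IH. rewrite IH. reflexivity.
Qed.

Definition Lf (al be ga : R) (x : H) : R :=
  match x with (m,n,k) => IZR m * al + IZR n * be + (IZR k - IZR m * IZR n / 2) * ga end.

Lemma J0_PJ f : J0 f -> PJ f.
Proof.
  intros [J Z0]. split.
  - exists 1. split; [lra|]. intros x y. rewrite J. rewrite Rminus_diag, Rabs_R0. lra.
  - assert (ODD : forall y, f (hinv y) = - f y).
    { intro y. specialize (J hone y). rewrite H_one_l, H_one_l, Z0 in J. lra. }
    assert (NAT : forall x N, f (hpow_nat x N) = INR N * f x /\ f (hpow_nat x (S N)) = INR (S N) * f x).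
    { intros x N. induction N as [|N [IH1 IH2]].
      - simpl. rewrite mul_one_r, Z0. split; ring.
      - split; [exact IH2|].
        specialize (J (hpow_nat x (S N)) x).
        assert (M : hmul (hpow_nat x (S N)) (hinv x) = hpow_nat x N).
        { rewrite <- (pow_comm x N), H_assoc, inv_r, mul_one_r. reflexivity. }
        rewrite pow_comm, M in J.
        rewrite IH1, IH2 in J. rewrite !S_INR in *. lra. }
    intros x [|p|p]; simpl.
    + rewrite Z0. ring.
    + rewrite (proj1 (NAT x _)), INR_IZR_INZ, positive_nat_Z. reflexivity.
    + rewrite ODD, (proj1 (NAT x _)), INR_IZR_INZ, positive_nat_Z.
      change (Z.neg p) with (- Z.pos p)%Z. rewrite opp_IZR. ring.
Qed.

Theorem lemma3p10 : forall f : H -> R, PJ f <-> J0 f.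
Proof.
  intro f. split; [|apply J0_PJ].
  intros [[d [dpos QJ]] HOM].
  assert (ODD : forall x, f (hinv x) = - f x).
  { intro x. assert (E : hpow x (-1) = hinv x).
    { simpl. rewrite mul_one_r. reflexivity. }
    rewrite <- E, HOM. replace (IZR (-1)) with (-1) by reflexivity. ring. }
  assert (ZERO : f hone = 0).
  { specialize (HOM hone 0%Z). simpl in HOM. rewrite HOM. ring. }
  set (al := f (1,0,0)%Z). set (be := f (0,1,0)%Z). set (ga := f (0,0,1)%Z).
  assert (CA : forall m, f (m,0,0)%Z = IZR m * al).
  { intro m. destruct (pow_form 1 0 0 m) as [t [E _]].
    unfold al, be, ga; rewrite <- HOM, E. f_equal. triple; ring. }
  assert (CB : forall m, f (0,m,0)%Z = IZR m * be).
  { intro m. destruct (pow_form 0 1 0 m) as [t [E _]].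
    unfold al, be, ga; rewrite <- HOM, E. f_equal. triple; ring. }
  assert (CC : forall m, f (0,0,m)%Z = IZR m * ga).
  { intro m. destruct (pow_form 0 0 1 m) as [t [E _]].
    unfold al, be, ga; rewrite <- HOM, E. f_equal. triple; ring. }
  assert (D : forall m n k, Rabs (f (m,n,k) - f (m,n,0%Z) - IZR k * ga) <= d).
  { intros m n k.
    pose proof (QJ (m,n,0%Z) (0,0,k)%Z) as Q1.
    pose proof (QJ (0,0,k)%Z (m,n,0%Z)) as Q2.
    replace (hmul (m,n,0%Z) (0,0,k)%Z) with (m,n,k) in Q1 by (unfold hmul; triple; ring).
    replace (hmul (m,n,0%Z) (hinv (0,0,k)%Z)) with (m,n,(-k)%Z) in Q1 by (unfold hmul, hinv; triple; ring).
    replace (hmul (0,0,k)%Z (m,n,0%Z)) with (m,n,k) in Q2 by (unfold hmul; triple; ring).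
    replace (hmul (0,0,k)%Z (hinv (m,n,0%Z))) with (hinv (m,n,(-k)%Z)) in Q2 by (unfold hmul, hinv; triple; ring).
    rewrite ODD, CC in Q2.
    apply rabs_iff in Q1. apply rabs_iff in Q2. apply rabs_iff. lra. }
  assert (E : forall m n, Rabs (2 * f (m,n,0%Z) + IZR m * IZR n * ga - 2 * IZR m * al - 2 * IZR n * be) <= 3 * d).
  { intros m n.
    pose proof (QJ (m,0,0)%Z (0,n,0)%Z) as Q1.
    pose proof (QJ (0,n,0)%Z (m,0,0)%Z) as Q2.
    pose proof (D m n (m*n)%Z) as Q3.
    replace (hmul (m,0,0)%Z (0,n,0)%Z) with (m,n,0%Z) in Q1 by (unfold hmul; triple; ring).
    replace (hmul (m,0,0)%Z (hinv (0,n,0)%Z)) with (m,(-n)%Z,0%Z) in Q1 by (unfold hmul, hinv; triple; ring).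
    replace (hmul (0,n,0)%Z (m,0,0)%Z) with (m,n,(m*n)%Z) in Q2 by (unfold hmul; triple; ring).
    replace (hmul (0,n,0)%Z (hinv (m,0,0)%Z)) with (hinv (m,(-n)%Z,0%Z)) in Q2 by (unfold hmul, hinv; triple; ring).
    rewrite ODD, CB in Q2. rewrite CA in Q1. rewrite mult_IZR in Q3.
    apply rabs_iff in Q1. apply rabs_iff in Q2. apply rabs_iff in Q3. apply rabs_iff. lra. }
  assert (BND : forall x, Rabs (f x - Lf al be ga x) <= 3 * d).
  { intros [[m n] k]. simpl. pose proof (D m n k) as Q1. pose proof (E m n) as Q2.
    apply rabs_iff in Q1. apply rabs_iff in Q2. apply rabs_iff. lra. }
  assert (HG : forall x N, f (hpow x N) - Lf al be ga (hpow x N) = IZR N * (f x - Lf al be ga x)).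
  { intros [[m n] k] N. rewrite HOM.
    enough (LH : Lf al be ga (hpow (m,n,k) N) = IZR N * Lf al be ga (m,n,k)) by (rewrite LH; ring).
    destruct (pow_form m n k N) as [t [Ep Ht]]. rewrite Ep. simpl.
    apply (f_equal IZR) in Ht. rewrite mult_IZR, mult_IZR, minus_IZR in Ht.
    rewrite !plus_IZR, !mult_IZR.
    replace (IZR t) with (IZR N * (IZR N - 1) / 2) by (simpl in Ht; lra).
    field. }
  assert (EQ : forall x, f x = Lf al be ga x).
  { intro x. destruct (Req_dec (f x - Lf al be ga x) 0) as [Z|NZ]; [lra|].
    exfalso. set (g := f x - Lf al be ga x) in *.
    assert (Hg : Rabs g > 0) by (apply Rabs_pos_lt; exact NZ).
    destruct (archimed (3 * d / Rabs g)) as [A1 _].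
    set (N := up (3 * d / Rabs g)) in *.
    pose proof (BND (hpow x N)) as B. rewrite HG, Rabs_mult in B.
    assert (P : 0 < 3 * d / Rabs g) by (apply Rdiv_lt_0_compat; lra).
    rewrite (Rabs_right (IZR N)) in B by lra. fold g in B.
    assert (3 * d / Rabs g * Rabs g = 3 * d) by (field; lra).
    assert (IZR N * Rabs g > 3 * d / Rabs g * Rabs g) by (apply Rmult_gt_compat_r; lra).
    lra. }
  split; [|exact ZERO].
  intros x y. rewrite !EQ. destruct x as [[m n] k], y as [[p q] l].
  unfold hmul, hinv, Lf.
  repeat rewrite ?plus_IZR, ?mult_IZR, ?minus_IZR, ?opp_IZR. field.
Qed.
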